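(* Let $X$ be a uniformly smooth Banach space, let $S\subset X$ be a nonempty bounded set, and let $a\in\operatorname{conv} S$. Then there exists a sequence $\{x_i\}_{i=1}^\infty\subset S$ such that, for every $k\in\mathbb{N}$, the vector $a_k=\frac1k\sum_{i=1}^k x_i$ satisfies $$\|a-a_k\|\le \frac{2e^2}{k\,\rho_X^{-1}(1/k)}\,\operatorname{diam} S .$$
   Context: The modulus of smoothness of a Banach space $X$ is $\rho_X(\tau)=\sup\{\tfrac12(\|x+\tau y\|+\|x-\tau y\|)-1 : \|x\|=\|y\|=1\}$ for $\tau\ge 0$. $X$ is uniformly smooth if $\rho_X(t)=o(t)$ as $t\to0$. The function $\rho_X$ is convex, strictly increasing and continuous on $[0,\infty)$, with $\rho_X(0)=0$, and it satisfies $\sqrt{1+\tau^2}-1\le\rho_X(\tau)$. Consequently it is a bijection of $[0,\infty)$ onto itself, and $\rho_X^{-1}$ denotes its inverse function. $\operatorname{conv} S$ is the convex hull of $S$, and $\operatorname{diam} S=\sup_{x,y\in S}\|x-y\|$. *)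

(* Defs.v *)
From Stdlib Require Import Reals Classical ClassicalEpsilon.
Open Scope R_scope.

Record NormedSpace := {
  carrier :> Type;
  vzero : carrier;
  vadd : carrier -> carrier -> carrier;
  vopp : carrier -> carrier;
  vscal : R -> carrier -> carrier;
  vnorm : carrier -> R;
  vadd_assoc : forall x y z, vadd x (vadd y z) = vadd (vadd x y) z;
  vadd_comm : forall x y, vadd x y = vadd y x;
  vadd_0 : forall x, vadd x vzero = x;
  vadd_opp : forall x, vadd x (vopp x) = vzero;
  vscal_1 : forall x, vscal 1 x = x;
  vscal_assoc : forall a b x, vscal a (vscal b x) = vscal (a * b) x;
  vscal_distr_v : forall a x y, vscal a (vadd x y) = vadd (vscal a x) (vscal a y);
  vscal_distr_s : forall a b x, vscal (a + b) x = vadd (vscal a x) (vscal b x);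
  vnorm_nonneg : forall x, 0 <= vnorm x;
  vnorm_eq0 : forall x, vnorm x = 0 -> x = vzero;
  vnorm_scal : forall a x, vnorm (vscal a x) = Rabs a * vnorm x;
  vnorm_triangle : forall x y, vnorm (vadd x y) <= vnorm x + vnorm y
}.

Arguments vzero {n}.
Arguments vadd {n}.
Arguments vopp {n}.
Arguments vscal {n}.
Arguments vnorm {n}.

Definition vsub {X : NormedSpace} (x y : X) : X := vadd x (vopp y).

Definition complete (X : NormedSpace) : Prop :=
  forall u : nat -> X,
    (forall eps, 0 < eps -> exists N, forall m n, (N <= m)%nat -> (N <= n)%nat ->
        vnorm (vsub (u m) (u n)) < eps) ->
    exists l : X, forall eps, 0 < eps -> exists N, forall n, (N <= n)%nat ->
        vnorm (vsub (u n) l) < eps.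

(* Supremum of a set of reals (the least upper bound when the set is nonempty
   and bounded above; 0 otherwise, a case never used below). *)
Definition sup_R (E : R -> Prop) : R :=
  match excluded_middle_informative (bound E /\ exists x, E x) with
  | left H => proj1_sig (completeness E (proj1 H) (proj2 H))
  | right _ => 0
  end.

Definition rho (X : NormedSpace) (tau : R) : R :=
  sup_R (fun r => exists x y : X, vnorm x = 1 /\ vnorm y = 1 /\
     r = (vnorm (vadd x (vscal tau y)) + vnorm (vsub x (vscal tau y))) / 2 - 1).

Definition rho_inv (X : NormedSpace) (s : R) : R :=
  epsilon (inhabits 0) (fun t => 0 <= t /\ rho X t = s).

Definition uniformly_smooth (X : NormedSpace) : Prop :=
  forall eps, 0 < eps -> exists delta, 0 < delta /\
    forall t, 0 < t < delta -> Rabs (rho X t) <= eps * t.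

Fixpoint vsum {X : NormedSpace} (f : nat -> X) (n : nat) : X :=
  match n with
  | O => vzero
  | S m => vadd (vsum f m) (f m)
  end.

Fixpoint rsum (w : nat -> R) (n : nat) : R :=
  match n with
  | O => 0
  | S m => rsum w m + w m
  end.

Definition conv {X : NormedSpace} (S : X -> Prop) (a : X) : Prop :=
  exists (n : nat) (w : nat -> R) (p : nat -> X),
    (forall i, (i < n)%nat -> 0 <= w i /\ S (p i)) /\
    rsum w n = 1 /\
    a = vsum (fun i => vscal (w i) (p i)) n.

Definition bounded_set {X : NormedSpace} (S : X -> Prop) : Prop :=
  exists M, forall x, S x -> vnorm x <= M.

Definition diam {X : NormedSpace} (S : X -> Prop) : R :=
  sup_R (fun r => exists x y, S x /\ S y /\ r = vnorm (vsub x y)).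

(* Main.v *)
Require Import Defs.
From Stdlib Require Import Reals Lra Lia Psatz Classical ClassicalEpsilon.
Open Scope R_scope.

Lemma add0l {X : NormedSpace} (x : X) : vadd vzero x = x.
Proof. rewrite vadd_comm. apply vadd_0. Qed.

Lemma add_cancel {X : NormedSpace} (a b c : X) : vadd a b = vadd a c -> b = c.
Proof.
  intro H. rewrite <- (add0l b), <- (add0l c), <- (vadd_opp X a),
    (vadd_comm X a (vopp a)), <- !vadd_assoc, H. reflexivity.
Qed.

Lemma scal0 {X : NormedSpace} (x : X) : vscal 0 x = vzero.
Proof.
  apply (add_cancel (vscal 0 x)). rewrite vadd_0, <- vscal_distr_s, Rplus_0_l.
  reflexivity.
Qed.

Lemma opp_eq {X : NormedSpace} (x : X) : vopp x = vscal (-1) x.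
Proof.
  apply (add_cancel x). rewrite vadd_opp. symmetry.
  rewrite <- (vscal_1 X x) at 1. rewrite <- vscal_distr_s.
  replace (1 + -1) with 0 by ring. apply scal0.
Qed.

Lemma scal_opp {X : NormedSpace} c (x : X) : vscal c (vopp x) = vopp (vscal c x).
Proof. rewrite !opp_eq, !vscal_assoc, Rmult_comm. reflexivity. Qed.

Lemma opp_add {X : NormedSpace} (a b : X) : vopp (vadd a b) = vadd (vopp a) (vopp b).
Proof. rewrite !opp_eq; apply vscal_distr_v. Qed.

Lemma opp_opp {X : NormedSpace} (a : X) : vopp (vopp a) = a.
Proof. rewrite !opp_eq, vscal_assoc. replace (-1 * -1) with 1 by ring. apply vscal_1. Qed.

Lemma scal_sub {X : NormedSpace} c (x y : X) : vscal c (vsub x y) = vsub (vscal c x) (vscal c y).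
Proof. unfold vsub; rewrite vscal_distr_v, scal_opp. reflexivity. Qed.

Lemma sub_scal_eq {X : NormedSpace} t (x y : X) : vsub x (vscal t y) = vadd x (vscal (-t) y).
Proof. unfold vsub; rewrite opp_eq, vscal_assoc. f_equal. f_equal. ring. Qed.

Lemma ACA {X : NormedSpace} (a b c d : X) :
  vadd (vadd a b) (vadd c d) = vadd (vadd a c) (vadd b d).
Proof. rewrite <- !vadd_assoc. f_equal. rewrite !vadd_assoc. f_equal. apply vadd_comm. Qed.

Lemma sub_add_add {X : NormedSpace} (A B C D : X) :
  vsub (vadd A B) (vadd C D) = vadd (vsub A C) (vsub B D).
Proof. unfold vsub; rewrite opp_add; apply ACA. Qed.

Lemma subsub {X : NormedSpace} (a u : X) : vsub a (vsub a u) = u.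
Proof. unfold vsub; rewrite opp_add, opp_opp, vadd_assoc, vadd_opp, add0l. reflexivity. Qed.

Lemma swap {X : NormedSpace} (u a p : X) : vsub u (vsub a p) = vsub p (vsub a u).
Proof.
  unfold vsub; rewrite !opp_add, !opp_opp.
  rewrite vadd_assoc, (vadd_comm X (vadd u (vopp a)) p). f_equal. apply vadd_comm.
Qed.

Lemma norm0 {X : NormedSpace} : vnorm (@vzero X) = 0.
Proof. rewrite <- (scal0 vzero), vnorm_scal, Rabs_R0; ring. Qed.

Lemma norm_opp {X : NormedSpace} (x : X) : vnorm (vopp x) = vnorm x.
Proof. rewrite opp_eq, vnorm_scal, Rabs_left by lra; ring. Qed.

Lemma norm_sub_le {X : NormedSpace} (x y : X) : vnorm (vsub x y) <= vnorm x + vnorm y.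
Proof. unfold vsub; rewrite <- (norm_opp y). apply vnorm_triangle. Qed.

Lemma vsum_sub {X : NormedSpace} n (w : nat -> R) (f : nat -> X) (c : X) :
  vsub (vsum (fun i => vscal (w i) (f i)) n) (vscal (rsum w n) c)
  = vsum (fun i => vscal (w i) (vsub (f i) c)) n.
Proof.
  induction n as [|n IH]; cbn [vsum rsum].
  - rewrite scal0; unfold vsub; apply vadd_opp.
  - rewrite vscal_distr_s, sub_add_add, IH, scal_sub. reflexivity.
Qed.

Lemma norm_vsum {X : NormedSpace} n (w : nat -> R) (f : nat -> X) :
  (forall i, (i < n)%nat -> 0 <= w i) ->
  vnorm (vsum (fun i => vscal (w i) (f i)) n) <= rsum (fun i => w i * vnorm (f i)) n.
Proof.
  induction n as [|n IH]; intro H; cbn [vsum rsum].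
  - rewrite norm0; lra.
  - eapply Rle_trans; [apply vnorm_triangle|].
    rewrite vnorm_scal, Rabs_pos_eq by (apply H; lia).
    apply Rplus_le_compat_r; apply IH; intros; apply H; lia.
Qed.

Lemma rsum_strict n (w g : nat -> R) K :
  (forall i, (i < n)%nat -> 0 <= w i /\ g i < K) ->
  rsum (fun i => w i * g i) n <= K * rsum w n /\
  (0 < rsum w n -> rsum (fun i => w i * g i) n < K * rsum w n).
Proof.
  induction n as [|n IH]; intro H; cbn [rsum].
  - split; [lra|]; intro; lra.
  - destruct IH as [I1 I2]; [intros; apply H; lia|].
    destruct (H n) as [Hw Hg]; [lia|].
    assert (E1 : w n * g n <= K * w n) by nra.
    split; [nra|]. intro Hp.
    destruct (Rlt_or_le 0 (rsum w n)) as [Hr|Hr].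
    + specialize (I2 Hr). nra.
    + assert (0 < w n) by lra. assert (w n * g n < K * w n) by nra. nra.
Qed.

Lemma rsum_le n (f g : nat -> R) :
  (forall i, (i < n)%nat -> f i <= g i) -> rsum f n <= rsum g n.
Proof.
  induction n as [|n IH]; intro H; cbn [rsum]; [lra|].
  apply Rplus_le_compat; [apply IH; intros; apply H; lia | apply H; lia].
Qed.

Lemma rsum_mulr n (w : nat -> R) c : rsum (fun i => w i * c) n = rsum w n * c.
Proof. induction n as [|n IH]; cbn [rsum]; [ring| rewrite IH; ring]. Qed.

Lemma conv_dist {X : NormedSpace} (T : X -> Prop) a x D :
  conv T a -> (forall p q, T p -> T q -> vnorm (vsub p q) <= D) -> T x ->
  vnorm (vsub a x) <= D.
Proof.
  intros (n & w & p & Hp & Hw & Ha) HD Hx.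
  rewrite <- (vscal_1 X x), <- Hw. subst a. rewrite vsum_sub.
  eapply Rle_trans; [apply norm_vsum; intros; apply Hp; auto|].
  eapply Rle_trans; [apply (rsum_le n _ (fun i => w i * D))|].
  - intros i Hi. destruct (Hp i Hi). apply Rmult_le_compat_l; auto.
  - rewrite rsum_mulr, Hw. lra.
Qed.

Lemma pick_exists {X : NormedSpace} (T : X -> Prop) a u :
  conv T a -> exists x, T x /\ vnorm u <= vnorm (vsub u (vsub a x)).
Proof.
  intros (n & w & p & Hp & Hw & Ha). apply NNPP; intro Hn.
  assert (Hlt : forall i, (i < n)%nat -> vnorm (vsub (p i) (vsub a u)) < vnorm u).
  { intros i Hi. rewrite <- swap. apply Rnot_le_lt. intro Hle. apply Hn.
    exists (p i). split; [apply Hp; auto | auto]. }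
  assert (Hu : u = vsum (fun i => vscal (w i) (vsub (p i) (vsub a u))) n).
  { rewrite <- (vsum_sub n w p (vsub a u)), Hw, vscal_1, <- Ha. symmetry; apply subsub. }
  pose proof (norm_vsum n w (fun i => vsub (p i) (vsub a u))) as Hn2.
  cbv beta in Hn2. rewrite <- Hu in Hn2.
  destruct (rsum_strict n w (fun i => vnorm (vsub (p i) (vsub a u))) (vnorm u)) as [_ H2].
  - intros i Hi. split; [apply Hp; auto | apply Hlt; auto].
  - rewrite Hw in H2. specialize (H2 ltac:(lra)).
    assert (vnorm u <= rsum (fun i => w i * vnorm (vsub (p i) (vsub a u))) n)
      by (apply Hn2; intros; apply Hp; auto).
    lra.
Qed.

Lemma sup_ub (E : R -> Prop) x : bound E -> E x -> x <= sup_R E.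
Proof.
  intros Hb Hx. unfold sup_R. destruct (excluded_middle_informative _) as [H|H].
  - destruct (proj2_sig (completeness E (proj1 H) (proj2 H))) as [Hm _]. apply Hm; auto.
  - exfalso; apply H; split; eauto.
Qed.

Lemma sup_lub (E : R -> Prop) M : (exists x, E x) -> (forall x, E x -> x <= M) -> sup_R E <= M.
Proof.
  intros Hne Hm. unfold sup_R. destruct (excluded_middle_informative _) as [H|H].
  - destruct (proj2_sig (completeness E (proj1 H) (proj2 H))) as [_ Hl]. apply Hl. intros x Hx; auto.
  - exfalso; apply H; split; [exists M; intros x Hx; auto | auto].
Qed.

Definition rset (X : NormedSpace) (t r : R) : Prop := exists x y : X, vnorm x = 1 /\ vnorm y = 1 /\
     r = (vnorm (vadd x (vscal t y)) + vnorm (vsub x (vscal t y))) / 2 - 1.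

Lemma rho_eq X t : rho X t = sup_R (rset X t).
Proof. reflexivity. Qed.

Lemma elem_le_abs {X : NormedSpace} (x y : X) t : vnorm x = 1 -> vnorm y = 1 ->
  (vnorm (vadd x (vscal t y)) + vnorm (vsub x (vscal t y))) / 2 - 1 <= Rabs t.
Proof.
  intros Hx Hy.
  pose proof (vnorm_triangle X x (vscal t y)). pose proof (norm_sub_le x (vscal t y)).
  rewrite vnorm_scal in *. rewrite Hx, Hy in *. lra.
Qed.

Lemma rset_bound X t : bound (rset X t).
Proof. exists (Rabs t). intros r (x & y & Hx & Hy & ->). apply elem_le_abs; auto. Qed.

Lemma rho_ge {X : NormedSpace} t (x y : X) : vnorm x = 1 -> vnorm y = 1 ->
  (vnorm (vadd x (vscal t y)) + vnorm (vsub x (vscal t y))) / 2 - 1 <= rho X t.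
Proof.
  intros Hx Hy. rewrite rho_eq. apply sup_ub; [apply rset_bound|]. exists x, y; auto.
Qed.

Lemma rho_le (X : NormedSpace) t M : (exists e : X, vnorm e = 1) ->
  (forall x y : X, vnorm x = 1 -> vnorm y = 1 ->
     (vnorm (vadd x (vscal t y)) + vnorm (vsub x (vscal t y))) / 2 - 1 <= M) ->
  rho X t <= M.
Proof.
  intros [e He] H. rewrite rho_eq. apply sup_lub.
  - exists ((vnorm (vadd e (vscal t e)) + vnorm (vsub e (vscal t e))) / 2 - 1). exists e, e; auto.
  - intros r (x & y & Hx & Hy & ->). apply H; auto.
Qed.

Lemma lip_norm {X : NormedSpace} (x y : X) t s :
  vnorm (vadd x (vscal t y)) <= vnorm (vadd x (vscal s y)) + Rabs (t - s) * vnorm y.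
Proof.
  replace (vadd x (vscal t y)) with (vadd (vadd x (vscal s y)) (vscal (t - s) y)).
  - rewrite <- vnorm_scal. apply vnorm_triangle.
  - rewrite <- vadd_assoc, <- vscal_distr_s. f_equal. f_equal. ring.
Qed.

Lemma rho_lip (X : NormedSpace) t s : (exists e : X, vnorm e = 1) ->
  rho X t <= rho X s + Rabs (t - s).
Proof.
  intros He. apply rho_le; auto. intros x y Hx Hy.
  pose proof (rho_ge s x y Hx Hy).
  rewrite !sub_scal_eq in *.
  pose proof (lip_norm x y t s). pose proof (lip_norm x y (-t) (-s)).
  replace (-t - - s) with (-(t-s)) in * by ring. rewrite Rabs_Ropp in *. rewrite Hy in *. lra.
Qed.

Lemma conv_norm {X : NormedSpace} (x y : X) l t : 0 <= l <= 1 ->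
  vnorm (vadd x (vscal (l * t) y)) <= (1 - l) * vnorm x + l * vnorm (vadd x (vscal t y)).
Proof.
  intros Hl.
  replace (vadd x (vscal (l * t) y)) with (vadd (vscal (1-l) x) (vscal l (vadd x (vscal t y)))).
  - eapply Rle_trans; [apply vnorm_triangle|]. rewrite !vnorm_scal, !Rabs_pos_eq by lra. lra.
  - rewrite vscal_distr_v, vscal_assoc, vadd_assoc, <- vscal_distr_s.
    replace (1 - l + l) with 1 by ring; rewrite vscal_1. reflexivity.
Qed.

Lemma rho_scale (X : NormedSpace) l t : (exists e : X, vnorm e = 1) -> 0 <= l <= 1 ->
  rho X (l * t) <= l * rho X t.
Proof.
  intros He Hl. apply rho_le; auto. intros x y Hx Hy.
  pose proof (rho_ge t x y Hx Hy).
  rewrite !sub_scal_eq in *. replace (- (l * t)) with (l * - t) by ring.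
  pose proof (conv_norm x y l t Hl). pose proof (conv_norm x y l (-t) Hl).
  rewrite Hx in *. nra.
Qed.

Lemma self_norm {X : NormedSpace} (e : X) c : vnorm (vadd e (vscal c e)) = Rabs (1 + c) * vnorm e.
Proof. rewrite <- (vscal_1 X e) at 1. rewrite <- vscal_distr_s. apply vnorm_scal. Qed.

Lemma self_elem {X : NormedSpace} (e : X) t : vnorm e = 1 ->
  (vnorm (vadd e (vscal t e)) + vnorm (vsub e (vscal t e))) / 2 - 1 = (Rabs (1 + t) + Rabs (1 - t)) / 2 - 1.
Proof. intro He. rewrite sub_scal_eq, !self_norm, He. replace (1 + - t) with (1 - t) by ring. rewrite !Rmult_1_r. reflexivity. Qed.

Lemma rho0 (X : NormedSpace) : (exists e : X, vnorm e = 1) -> rho X 0 <= 0.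
Proof.
  intro He. apply rho_le; auto. intros x y Hx Hy. rewrite scal0, vadd_0.
  pose proof (norm_sub_le x (@vzero X)). rewrite norm0 in *. lra.
Qed.

Lemma rho_cont (X : NormedSpace) s : (exists e : X, vnorm e = 1) -> continuity (fun t => rho X t - s).
Proof.
  intros He x. unfold continuity_pt, continue_in, limit1_in, limit_in.
  intros eps Heps. exists eps. split; [lra|]. intros y [_ Hy]. simpl in *. unfold R_dist in *.
  pose proof (rho_lip X x y He). pose proof (rho_lip X y x He).
  rewrite Rabs_minus_sym in H.
  apply Rle_lt_trans with (Rabs (y - x)); [|auto].
  replace (rho X y - s - (rho X x - s)) with (rho X y - rho X x) by ring.
  apply Rabs_le. lra.
Qed.

Lemma rho_inv_spec (X : NormedSpace) (N : nat) : (exists e : X, vnorm e = 1) -> (1 <= N)%nat ->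
  0 < rho_inv X (/ INR N) <= 2 /\ rho X (rho_inv X (/ INR N)) = / INR N.
Proof.
  intros He HN.
  assert (HNp : 1 <= INR N) by (apply (le_INR 1); auto).
  assert (Hi : 0 < / INR N <= 1).
  { split; [apply Rinv_0_lt_compat; lra|]. rewrite <- Rinv_1. apply Rinv_le_contravar; lra. }
  assert (Hex : exists t, 0 <= t /\ rho X t = / INR N).
  { destruct (IVT (fun t => rho X t - / INR N) 0 3 (rho_cont X _ He)) as [z [Hz1 Hz2]].
    - lra.
    - pose proof (rho0 X He). lra.
    - destruct He as [e He]. pose proof (rho_ge 3 e e He He). rewrite self_elem in H by auto.
      rewrite !Rabs_pos_eq in H by lra. rewrite Rabs_left in H by lra. lra.
    - exists z. split; lra. }
  pose proof (epsilon_spec (inhabits 0) (fun t => 0 <= t /\ rho X t = / INR N) Hex) as [H1 H2].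
  unfold rho_inv. set (t := epsilon _ _) in *. split; [|auto]. split.
  - destruct H1 as [H1|H1]; auto. subst t. rewrite <- H1 in H2. pose proof (rho0 X He). lra.
  - destruct He as [e He]. pose proof (rho_ge t e e He He). rewrite self_elem in H by auto.
    rewrite Rabs_pos_eq in H by lra.
    pose proof (Rle_abs (-(1-t))) as H0. rewrite Rabs_Ropp in H0. lra.
Qed.

Lemma step (X : NormedSpace) (u v : X) D tau N B :
  (exists e : X, vnorm e = 1) -> 0 < D -> 0 < tau -> 0 < N -> rho X tau = / N ->
  vnorm u <= vnorm (vsub u v) -> vnorm v <= D -> vnorm u <= B ->
  vnorm (vadd u v) <= Rmax (D / tau + D) (B + 2 * D / (tau * N)).
Proof.
  intros He HD Ht HN Hr Huv Hv HB.
  assert (Hq : 0 < D / tau) by (apply Rdiv_lt_0_compat; lra).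
  assert (Hq2 : 0 <= 2 * D / (tau * N)) by (apply Rlt_le, Rdiv_lt_0_compat; nra).
  destruct (Rlt_or_le (vnorm u) (D / tau)) as [H1|H1].
  - eapply Rle_trans; [|apply Rmax_l]. pose proof (vnorm_triangle X u v). lra.
  - eapply Rle_trans; [|apply Rmax_r].
    destruct (Req_dec (vnorm v) 0) as [Hv0|Hv0].
    + pose proof (vnorm_triangle X u v). lra.
    + set (nu := vnorm u) in *. set (nv := vnorm v) in *.
      assert (Hnv : 0 < nv) by (pose proof (vnorm_nonneg X v); fold nv in H; lra).
      assert (Hnu : 0 < nu) by lra.
      set (x := vscal (/ nu) u). set (y := vscal (/ nv) v). set (t := nv / nu).
      assert (Hx : vnorm x = 1).
      { unfold x. rewrite vnorm_scal, Rabs_pos_eq by (apply Rlt_le, Rinv_0_lt_compat; lra).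
        fold nu. field. lra. }
      assert (Hy : vnorm y = 1).
      { unfold y. rewrite vnorm_scal, Rabs_pos_eq by (apply Rlt_le, Rinv_0_lt_compat; lra).
        fold nv. field. lra. }
      assert (E1 : vadd x (vscal t y) = vscal (/ nu) (vadd u v)).
      { unfold x, y, t. rewrite vscal_assoc, vscal_distr_v. f_equal. f_equal. field. lra. }
      assert (E2 : vsub x (vscal t y) = vscal (/ nu) (vsub u v)).
      { unfold x, y, t. rewrite vscal_assoc, scal_sub. f_equal. f_equal. field. lra. }
      pose proof (rho_ge t x y Hx Hy) as G. rewrite E1, E2, !vnorm_scal in G.
      rewrite Rabs_pos_eq in G by (apply Rlt_le, Rinv_0_lt_compat; lra).
      assert (Htt : nv <= tau * nu).
      { apply Rle_trans with D; auto. unfold Rdiv in H1.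
        apply Rmult_le_compat_l with (r := tau) in H1; [|lra].
        rewrite <- Rmult_assoc, (Rmult_comm tau D), Rmult_assoc, Rinv_r, Rmult_1_r in H1; lra. }
      assert (Hl : 0 <= t / tau <= 1).
      { unfold t. split.
        - apply Rlt_le, Rdiv_lt_0_compat; [apply Rdiv_lt_0_compat|]; lra.
        - unfold Rdiv. apply Rmult_le_reg_r with (tau * nu); [nra|].
          field_simplify; try lra. }
      pose proof (rho_scale X (t / tau) tau He Hl) as G2.
      replace (t / tau * tau) with t in G2 by (field; lra).
      rewrite Hr in G2.
      set (A := vnorm (vadd u v)) in *. set (Bm := vnorm (vsub u v)) in *.
      assert (K : A + Bm <= 2 * nu + 2 * nv / (tau * N)).
      { assert (K1 : (/ nu * A + / nu * Bm) / 2 - 1 <= t / tau * / N) by lra.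
        apply Rmult_le_compat_l with (r := 2 * nu) in K1; [|lra].
        unfold t in K1. field_simplify in K1; try lra. }
      assert (K2 : 2 * nv / (tau * N) <= 2 * D / (tau * N)).
      { unfold Rdiv. apply Rmult_le_compat_r; [apply Rlt_le, Rinv_0_lt_compat; nra|]. lra. }
      lra.
Qed.

Definition pick {X : NormedSpace} (T : X -> Prop) (a u : X) : X :=
  epsilon (inhabits vzero) (fun x => T x /\ vnorm u <= vnorm (vsub u (vsub a x))).

Fixpoint psum {X : NormedSpace} (T : X -> Prop) (a : X) (k : nat) : X :=
  match k with
  | O => vzero
  | S k' => vadd (psum T a k') (pick T a (vsub (vscal (INR k') a) (psum T a k')))
  end.

Definition xs {X : NormedSpace} (T : X -> Prop) (a : X) (k : nat) : X :=
  pick T a (vsub (vscal (INR k) a) (psum T a k)).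

Lemma vsum_xs {X : NormedSpace} T (a : X) k : vsum (xs T a) k = psum T a k.
Proof. induction k as [|k IH]; cbn [vsum psum]; [reflexivity|]. rewrite IH. reflexivity. Qed.

Lemma pick_spec {X : NormedSpace} (T : X -> Prop) a u : conv T a ->
  T (pick T a u) /\ vnorm u <= vnorm (vsub u (vsub a (pick T a u))).
Proof. intro Ha. unfold pick. apply (epsilon_spec (inhabits vzero) (fun x => T x /\ vnorm u <= vnorm (vsub u (vsub a x)))). apply pick_exists; auto. Qed.

Definition Ek {X : NormedSpace} (T : X -> Prop) (a : X) k := vsub (vscal (INR k) a) (psum T a k).

Lemma Ek_succ {X : NormedSpace} T (a : X) k : Ek T a (S k) = vadd (Ek T a k) (vsub a (xs T a k)).
Proof.
  unfold Ek. cbn [psum]. rewrite S_INR, vscal_distr_s, vscal_1, sub_add_add. reflexivity.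
Qed.

Lemma Ek0 {X : NormedSpace} T (a : X) : vnorm (Ek T a 0) = 0.
Proof.
  unfold Ek. cbn [psum INR]. rewrite scal0. pose proof (norm_sub_le (@vzero X) vzero).
  rewrite norm0 in H. pose proof (vnorm_nonneg X (vsub vzero vzero)). lra.
Qed.

Lemma final_eq {X : NormedSpace} T (a : X) k : (1 <= k)%nat ->
  vnorm (vsub a (vscal (/ INR k) (vsum (xs T a) k))) = / INR k * vnorm (Ek T a k).
Proof.
  intro Hk. assert (HN : 1 <= INR k) by (apply (le_INR 1); auto).
  assert (Hp : 0 <= / INR k) by (apply Rlt_le, Rinv_0_lt_compat; lra).
  unfold Ek. rewrite vsum_xs.
  transitivity (vnorm (vscal (/ INR k) (vsub (vscal (INR k) a) (psum T a k)))).
  - rewrite scal_sub, vscal_assoc, Rinv_l, vscal_1 by lra. reflexivity.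
  - rewrite vnorm_scal, Rabs_pos_eq by exact Hp. reflexivity.
Qed.

Theorem theorem1 (X : NormedSpace) (HX : complete X) (Hus : uniformly_smooth X)
  (S : X -> Prop) (HSne : exists s, S s) (HSb : bounded_set S)
  (a : X) (Ha : conv S a) :
  exists x : nat -> X, (forall i, S (x i)) /\
    forall k : nat, (1 <= k)%nat ->
      vnorm (vsub a (vscal (/ INR k) (vsum x k)))
        <= 2 * exp 1 ^ 2 / (INR k * rho_inv X (/ INR k)) * diam S.
Proof.
  destruct HSb as [M HM]. destruct HSne as [s0 Hs0].
  set (D := diam S).
  assert (Hb : bound (fun r => exists x y, S x /\ S y /\ r = vnorm (vsub x y))).
  { exists (M + M). intros r (x & y & Hx & Hy & ->).
    pose proof (norm_sub_le x y). pose proof (HM x Hx). pose proof (HM y Hy). lra. }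
  assert (Hdiam : forall p q, S p -> S q -> vnorm (vsub p q) <= D).
  { intros p q Hp Hq. apply sup_ub; auto. exists p, q; auto. }
  assert (HD0 : 0 <= D).
  { pose proof (Hdiam s0 s0 Hs0 Hs0). pose proof (vnorm_nonneg X (vsub s0 s0)). lra. }
  assert (Hv : forall k, vnorm (vsub a (xs S a k)) <= D).
  { intro k. apply (conv_dist S); auto. apply (pick_spec S a _ Ha). }
  exists (xs S a). split; [intro i; apply (pick_spec S a _ Ha)|].
  intros k Hk. rewrite final_eq by auto.
  assert (HN : 1 <= INR k) by (apply (le_INR 1); auto).
  assert (Hik : 0 < / INR k) by (apply Rinv_0_lt_compat; lra).
  destruct HD0 as [HDp|HD0].
  -
    assert (He : exists e : X, vnorm e = 1).
    { apply NNPP; intro Hne.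
      assert (Hle : D <= 0).
      { apply sup_lub; [exists (vnorm (vsub s0 s0)); exists s0, s0; auto|].
        intros r (p & q & Hp & Hq & ->). apply Rnot_lt_le; intro Hpos. apply Hne.
        exists (vscal (/ vnorm (vsub p q)) (vsub p q)).
        rewrite vnorm_scal, Rabs_pos_eq by (apply Rlt_le, Rinv_0_lt_compat; lra).
        field. lra. }
      lra. }
    destruct (rho_inv_spec X k He Hk) as [[Ht1 Ht2] Hr].
    set (tau := rho_inv X (/ INR k)) in *.
    assert (Bnd : forall j, vnorm (Ek S a j) <= D / tau + D + 2 * D * INR j / (tau * INR k)).
    { induction j as [|j IH].
      - rewrite Ek0. cbn [INR]. assert (0 < D / tau) by (apply Rdiv_lt_0_compat; lra).
        assert (2 * D * 0 / (tau * INR k) = 0) by (field; lra). lra.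
      - rewrite Ek_succ.
        destruct (pick_spec S a (Ek S a j) Ha) as [_ Hpk].
        eapply Rle_trans.
        + apply (step X (Ek S a j) (vsub a (xs S a j)) D tau (INR k)
                  (D / tau + D + 2 * D * INR j / (tau * INR k))); auto; lra.
        + apply Rmax_lub.
          * rewrite S_INR. assert (0 <= 2 * D * (INR j + 1) / (tau * INR k)).
            { apply Rlt_le, Rdiv_lt_0_compat; [|nra]. pose proof (pos_INR j). nra. }
            lra.
          * rewrite S_INR. apply Req_le. field. lra. }
    specialize (Bnd k).
    replace (2 * D * INR k / (tau * INR k)) with (2 * D / tau) in Bnd by (field; lra).
    assert (He2 : 4 <= exp 1 ^ 2).
    { pose proof (exp_ineq1 1 ltac:(lra)). nra. }
    assert (Hg : 3 * D / tau + D <= 2 * exp 1 ^ 2 * D / tau).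
    { apply Rmult_le_reg_r with tau; [lra|]. field_simplify; try lra. nra. }
    replace (2 * exp 1 ^ 2 / (INR k * tau) * D) with (/ INR k * (2 * exp 1 ^ 2 * D / tau))
      by (field; lra).
    apply Rmult_le_compat_l; [lra|].
    replace (D / tau + D + 2 * D / tau) with (3 * D / tau + D) in Bnd by (field; lra). lra.
  -
    assert (Z : forall j, vnorm (Ek S a j) <= 0).
    { induction j as [|j IH]; [rewrite Ek0; lra|].
      rewrite Ek_succ. pose proof (vnorm_triangle X (Ek S a j) (vsub a (xs S a j))).
      pose proof (Hv j). lra. }
    rewrite <- HD0, Rmult_0_r. pose proof (Z k). nra.
Qed.
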